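(* Let $A$ be a sesquiad and $A^{\mathrm{red}}=A/\operatorname{Nil}(A)$. Then $A^{\mathrm{red}}$ is reduced, it is the largest reduced quotient of $A$ (by a congruence), and the projection $A\to A^{\mathrm{red}}$ induces a homeomorphism $\operatorname{spec}_cA^{\mathrm{red}}\to\operatorname{spec}_cA$.
   Context: Monoids are commutative with $1$ and a zero $0$. A sesquiad is a monoid $A$ with an addition: partially defined sums $\sum_jk_ja_j$ coming from an injective monoid morphism $\varphi:A\to R$ into a commutative ring with $\varphi(0)=0$, defined exactly when $\sum_jk_j\varphi(a_j)\in\varphi(A)$. A congruence is an equivalence relation $\mathcal C$ on $A$ such that $A/\mathcal C$ admits an addition making $A\to A/\mathcal C$ a sesquiad morphism; the quotient $A/\mathcal C$ carries the minimal such addition (the one defined by $A/\mathcal C\hookrightarrow R_A/J$, $J$ the ideal of the universal ring $R_A$ generated by $a-b$, $a\sim_{\mathcal C}b$). A congruence is prime if $A/\mathcal C$ is integral ($1\not\sim 0$; $af\sim bf\Rightarrow a\sim b$ or $f\sim0$). $\operatorname{spec}_cA$ is the set of prime congruences with topology generated by $D(a,b)=\{\mathcal C:(a,b)\notin\mathcal C\}$. A sesquiad morphism $\varphi:A\to B$ induces $\varphi^*:\operatorname{spec}_cB\to\operatorname{spec}_cA$, $E\mapsto\{(a,a'):\varphi(a)\sim_E\varphi(a')\}$. $\operatorname{Nil}(A)=\bigcap_{E\in\operatorname{spec}_cA}E$, and $A$ is reduced if $\operatorname{Nil}(A)$ is the diagonal $\Delta$. *)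

(* Defs.v *)
From HB Require Import structures.
From mathcomp Require Import all_boot all_order all_algebra.
From Stdlib Require Import ClassicalEpsilon.
Set Implicit Arguments. Unset Strict Implicit. Unset Printing Implicit Defensive.
Import GRing.Theory.
Local Open Scope ring_scope.

(* Operations of a sesquiad on a carrier T: multiplication, 1, 0, and the
   partial addition, given as the relation  ssums l b  meaning that the
   formal sum  \sum_j k_j a_j  (l = [:: (k_1,a_1); ...]) is defined and equals b. *)
Record sesq (T : Type) := Sesq {
  smul : T -> T -> T;
  sone : T;
  szero : T;
  ssums : seq (int * T) -> T -> Prop }.

Definition ring_embedding T (S : sesq T) (R : comPzRingType) (phi : T -> R) : Prop :=
  injective phi /\ phi (sone S) = 1 /\ phi (szero S) = 0 /\
  (forall x y, phi (smul S x y) = phi x * phi y) /\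
  (forall l b, ssums S l b <-> \sum_(p <- l) phi p.2 *~ p.1 = phi b).

Definition is_sesquiad T (S : sesq T) : Prop :=
  exists (R : comPzRingType) (phi : T -> R), ring_embedding S phi.

Definition ring_sesq (R : comPzRingType) : sesq R :=
  @Sesq R (fun x y => x * y) 1 0 (fun l b => \sum_(p <- l) p.2 *~ p.1 = b).

Definition sesq_morph T U (S : sesq T) (S' : sesq U) (f : T -> U) : Prop :=
  f (sone S) = sone S' /\ f (szero S) = szero S' /\
  (forall x y, f (smul S x y) = smul S' (f x) (f y)) /\
  (forall l b, ssums S l b -> ssums S' [seq (p.1, f p.2) | p <- l] (f b)).

Definition qclass T (C : T -> T -> Prop) (P : T -> Prop) : Prop :=
  exists a, forall x, P x <-> C a x.
Definition quot T (C : T -> T -> Prop) : Type := {P : T -> Prop | qclass C P}.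
Definition qproj T (C : T -> T -> Prop) (a : T) : quot C :=
  exist (qclass C) (C a) (ex_intro _ a (fun x => iff_refl (C a x))).
Definition qrep T (C : T -> T -> Prop) (X : quot C) : T :=
  proj1_sig (constructive_indefinite_description _ (proj2_sig X)).
Definition qmul T (S : sesq T) (C : T -> T -> Prop) (X Y : quot C) : quot C :=
  qproj C (smul S (qrep X) (qrep Y)).

(* psi : T -> R is a sesquiad morphism to a ring which identifies C-related elements;
   these are exactly the ring maps out of R_A/J, J generated by a - b, a ~C b. *)
Definition kills T (S : sesq T) (C : T -> T -> Prop) (R : comPzRingType) (psi : T -> R) :=
  sesq_morph S (ring_sesq R) psi /\ (forall a b, C a b -> psi a = psi b).

(* Minimal addition on T/C: the one induced by T/C -> R_A/J, i.e.
   sum_j k_j [a_j] = [b] iff sum_j k_j a_j = b in R_A/J, expressed through the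
   universal property of R_A/J. *)
Definition qsums T (S : sesq T) (C : T -> T -> Prop)
    (l : seq (int * quot C)) (Y : quot C) : Prop :=
  forall (R : comPzRingType) (psi : T -> R), kills S C psi ->
    \sum_(p <- l) psi (qrep p.2) *~ p.1 = psi (qrep Y).

Definition quot_sesq T (S : sesq T) (C : T -> T -> Prop) : sesq (quot C) :=
  @Sesq (quot C) (@qmul T S C) (qproj C (sone S)) (qproj C (szero S)) (@qsums T S C).

Definition is_congruence T (S : sesq T) (C : T -> T -> Prop) : Prop :=
  (forall a, C a a) /\ (forall a b, C a b -> C b a) /\
  (forall a b c, C a b -> C b c -> C a c) /\
  (forall a a' b b', C a a' -> C b b' -> C (smul S a b) (smul S a' b')) /\
  exists sums' : seq (int * quot C) -> quot C -> Prop,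
    is_sesquiad (@Sesq (quot C) (@qmul T S C) (qproj C (sone S)) (qproj C (szero S)) sums')
    /\ sesq_morph S (@Sesq (quot C) (@qmul T S C) (qproj C (sone S)) (qproj C (szero S)) sums')
                  (qproj C).

Definition integral T (S : sesq T) : Prop :=
  sone S <> szero S /\
  forall a b f, smul S a f = smul S b f -> a = b \/ f = szero S.

Definition prime_cong T (S : sesq T) (C : T -> T -> Prop) : Prop :=
  is_congruence S C /\ integral (quot_sesq S C).

Definition NilC T (S : sesq T) : T -> T -> Prop :=
  fun a b => forall E, prime_cong S E -> E a b.
Definition reduced T (S : sesq T) : Prop := forall a b, NilC S a b -> a = b.

Definition spec T (S : sesq T) : Type := {E : T -> T -> Prop | prime_cong S E}.
Definition Dset T (S : sesq T) (a b : T) (E : spec S) : Prop := ~ proj1_sig E a b.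
Definition Dfin T (S : sesq T) (l : seq (T * T)) (E : spec S) : Prop :=
  forall p, List.In p l -> Dset p.1 p.2 E.
Definition spec_open T (S : sesq T) (U : spec S -> Prop) : Prop :=
  forall E, U E -> exists l, Dfin l E /\ forall E', Dfin l E' -> U E'.

Definition comap T U (f : T -> U) (E : U -> U -> Prop) : T -> T -> Prop :=
  fun a a' => E (f a) (f a').
Definition spec_map T U (S : sesq T) (S' : sesq U) (f : T -> U)
    (H : forall E, prime_cong S' E -> prime_cong S (comap f E)) (E : spec S') : spec S :=
  exist (prime_cong S) (comap f (proj1_sig E)) (H _ (proj2_sig E)).

Definition homeomorphism T U (S : sesq T) (S' : sesq U) (g : spec S -> spec S') : Prop :=
  bijective g /\
  (forall V, spec_open V -> spec_open (fun E => V (g E))) /\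
  (forall W, spec_open W -> spec_open (fun E' => exists E, W E /\ g E = E')).

(* Main.v *)
Require Import Defs.
From HB Require Import structures.
From mathcomp Require Import all_boot all_order all_algebra.
From mathcomp Require Import boolp.
From Stdlib Require Import ClassicalEpsilon FunctionalExtensionality PropExtensionality ProofIrrelevance Classical.
Set Implicit Arguments. Unset Strict Implicit. Unset Printing Implicit Defensive.
Import GRing.Theory.
Local Open Scope ring_scope.

Section DP.
Variables (I : Type) (R : I -> comPzRingType).
Definition dprod := forall i, R i.
HB.instance Definition _ := gen_eqMixin dprod.
HB.instance Definition _ := gen_choiceMixin dprod.
Definition dz : dprod := fun i => 0.
Definition dopp (f : dprod) : dprod := fun i => - f i.
Definition dadd (f g : dprod) : dprod := fun i => f i + g i.
Definition d1 : dprod := fun i => 1.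
Definition dmul (f g : dprod) : dprod := fun i => f i * g i.
Lemma daddA : associative dadd.
Proof. move=> f g h; apply: functional_extensionality_dep => i; exact: addrA. Qed.
Lemma daddC : commutative dadd.
Proof. move=> f g; apply: functional_extensionality_dep => i; exact: addrC. Qed.
Lemma dadd0 : left_id dz dadd.
Proof. move=> f; apply: functional_extensionality_dep => i; exact: add0r. Qed.
Lemma daddN : left_inverse dz dopp dadd.
Proof. move=> f; apply: functional_extensionality_dep => i; exact: addNr. Qed.
HB.instance Definition _ := GRing.isZmodule.Build dprod daddA daddC dadd0 daddN.
Lemma dmulA : associative dmul.
Proof. move=> f g h; apply: functional_extensionality_dep => i; exact: mulrA. Qed.
Lemma dmulC : commutative dmul.
Proof. move=> f g; apply: functional_extensionality_dep => i; exact: mulrC. Qed.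
Lemma dmul1 : left_id d1 dmul.
Proof. move=> f; apply: functional_extensionality_dep => i; exact: mul1r. Qed.
Lemma dmulD : left_distributive dmul (@GRing.add dprod).
Proof. move=> f g h; apply: functional_extensionality_dep => i; exact: mulrDl. Qed.
HB.instance Definition _ := GRing.Zmodule_isComPzRing.Build dprod dmulA dmulC dmul1 dmulD.
Definition deval (i : I) (f : dprod) : R i := f i.
Lemma deval_morph i : zmod_morphism (deval i).
Proof. by []. Qed.
HB.instance Definition _ i := GRing.isZmodMorphism.Build dprod (R i) (deval i) (deval_morph i).
Lemma dprod_sum (l : seq (int * dprod)) i : (\sum_(p <- l) p.2 *~ p.1) i = \sum_(p <- l) p.2 i *~ p.1.
Proof.
have -> : (\sum_(p <- l) p.2 *~ p.1) i = deval i (\sum_(p <- l) p.2 *~ p.1) by [].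
rewrite raddf_sum; apply: eq_bigr => p _; by rewrite raddfMz.
Qed.
Lemma dprod_one i : (1 : dprod) i = 1. Proof. by []. Qed.
Lemma dprod_zero i : (0 : dprod) i = 0. Proof. by []. Qed.
Lemma dprod_mul (f g : dprod) i : (f * g) i = f i * g i. Proof. by []. Qed.
End DP.

Section Q.
Variables (T : Type) (D : T -> T -> Prop).
Definition equivR := (forall a, D a a) /\ (forall a b, D a b -> D b a) /\
  (forall a b c, D a b -> D b c -> D a c).

Lemma quot_eq (X Y : quot D) : proj1_sig X = proj1_sig Y -> X = Y.
Proof. destruct X as [P HP], Y as [Q HQ]; simpl; intros ->; f_equal; apply proof_irrelevance. Qed.

Lemma qproj_rep (X : quot D) : qproj D (qrep X) = X.
Proof.
apply quot_eq; simpl; unfold qrep.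
destruct (constructive_indefinite_description _ _) as [a Ha]; simpl.
apply functional_extensionality => x; apply propositional_extensionality; symmetry; apply Ha.
Qed.

Lemma qrep_proj (Hr : forall a, D a a) a : D (qrep (qproj D a)) a.
Proof.
unfold qrep; destruct (constructive_indefinite_description _ _) as [r Hx]; simpl in *.
apply Hx, Hr.
Qed.

Lemma qproj_eq (He : equivR) a b : qproj D a = qproj D b <-> D a b.
Proof.
destruct He as [Hr [Hs Ht]]; split.
- intro H; have H' := f_equal (@proj1_sig _ _) H; simpl in H'; rewrite H'; apply Hr.
- intro H; apply quot_eq; simpl; apply functional_extensionality => x;
  apply propositional_extensionality; split; intro Hx; eauto.
Qed.
End Q.

Lemma spec_eq T (S : sesq T) (E1 E2 : spec S) : proj1_sig E1 = proj1_sig E2 -> E1 = E2.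
Proof. destruct E1 as [P HP], E2 as [Q HQ]; simpl; intros ->; f_equal; apply proof_irrelevance. Qed.

Lemma cong_equiv T (S : sesq T) C : is_congruence S C -> equivR C.
Proof. intros [a [b [c _]]]; split; auto. Qed.

Lemma qmul_proj T (S : sesq T) C : is_congruence S C ->
  forall a b, qproj C (smul S a b) = qmul S (qproj C a) (qproj C b).
Proof.
intros HC a b; have He := cong_equiv HC; destruct HC as [Hr [Hs [Ht [Hm _]]]].
unfold qmul; apply qproj_eq; auto.
apply Hm; apply Hs; apply qrep_proj; auto.
Qed.

Lemma qsums_proj T (S : sesq T) C : equivR C -> forall l b, ssums S l b ->
  qsums S [seq (p.1, qproj C p.2) | p <- l] (qproj C b).
Proof.
intros [Hr _] l b Hl; unfold qsums; intros R psi [[h1 [h0 [hm hs]]] hk].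
rewrite big_map /=.
have E : forall x, psi (qrep (qproj C x)) = psi x by intro x; apply hk, qrep_proj.
under eq_bigr => p _ do rewrite E.
rewrite E; have K := hs l b Hl; simpl in K; rewrite big_map /= in K; exact K.
Qed.

Lemma cong_of_map T (S : sesq T) (D : T -> T -> Prop) (R : comPzRingType) (psi : T -> R) :
  sesq_morph S (ring_sesq R) psi -> (forall a b, D a b <-> psi a = psi b) -> is_congruence S D.
Proof.
intros [h1 [h0 [hm hs]]] hD.
have He : equivR D.
{ split; [|split].
  - intro; apply hD; reflexivity.
  - intros a b H; apply hD; symmetry; apply hD; auto.
  - intros a b c H1 H2; apply hD; rewrite (proj1 (hD _ _) H1); apply hD; auto. }
have Hr := proj1 He.
have Hpr : forall x, psi (qrep (qproj D x)) = psi x by intro x; apply hD, qrep_proj.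
have Hmul : forall a a' b b', D a a' -> D b b' -> D (smul S a b) (smul S a' b').
{ intros a a' b b' Ha Hb; apply hD; rewrite !hm /=.
  rewrite (proj1 (hD _ _) Ha) (proj1 (hD _ _) Hb); reflexivity. }
split; [apply He|split;[apply He|split;[apply He|split;[apply Hmul|]]]].
exists (fun l Y => \sum_(p <- l) psi (qrep p.2) *~ p.1 = psi (qrep Y)).
split.
- exists R, (fun X => psi (qrep X)); split; [|split;[|split;[|split]]].
  + intros X Y H; rewrite -(qproj_rep X) -(qproj_rep Y); apply qproj_eq; auto; apply hD; exact H.
  + simpl; rewrite Hpr; exact h1.
  + simpl; rewrite Hpr; exact h0.
  + intros x y; simpl; unfold qmul; rewrite Hpr hm; reflexivity.
  + intros l b; simpl; tauto.
- split; [reflexivity|split;[reflexivity|split]].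
  + intros x y; simpl; unfold qmul; apply qproj_eq; auto.
    apply Hmul; apply He; apply qrep_proj; auto.
  + intros l b Hl; simpl. rewrite big_map /=.
    under eq_bigr => p _ do rewrite Hpr.
    rewrite Hpr; have K := hs l b Hl; simpl in K; rewrite big_map /= in K; exact K.
Qed.

Lemma map_of_cong T (S : sesq T) D : is_congruence S D ->
  exists (R : comPzRingType) (psi : T -> R),
    sesq_morph S (ring_sesq R) psi /\ forall a b, D a b <-> psi a = psi b.
Proof.
intros HC; have He := cong_equiv HC.
destruct HC as [hr [hsy [ht [hm [sums' [[R [phi [inj [p1 [p0 [pm ps]]]]]] [m1 [m0 [mm ms]]]]]]]]].
exists R, (fun a => phi (qproj D a)); split; [split;[|split;[|split]]|].
- exact p1.
- exact p0.
- intros x y; simpl; rewrite mm; apply pm.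
- intros l b Hl; simpl; have K := proj1 (ps _ _) (ms l b Hl).
  rewrite big_map /= in K; rewrite big_map /=; exact K.
- intros a b; split.
  + intro H; f_equal; apply qproj_eq; auto.
  + intro H; apply inj in H; exact (proj1 (qproj_eq He a b) H).
Qed.

Lemma prime_iff T (S : sesq T) D : is_congruence S D ->
  (integral (quot_sesq S D) <->
   ~ D (sone S) (szero S) /\ forall a b f, D (smul S a f) (smul S b f) -> D a b \/ D f (szero S)).
Proof.
intros HC; have He := cong_equiv HC; split.
- intros [H1 H2]; split.
  + intro H; apply H1; simpl; apply qproj_eq; auto.
  + intros a b f H.
    have := H2 (qproj D a) (qproj D b) (qproj D f); simpl.
    rewrite -!qmul_proj // !qproj_eq //; intro K; apply K; auto.
- intros [H1 H2]; split.
  + intro H; apply H1; simpl in H; exact (proj1 (qproj_eq He _ _) H).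
  + intros X Y F; simpl; unfold qmul; rewrite qproj_eq //.
    intro H; destruct (H2 _ _ _ H) as [K|K]; [left|right].
    * rewrite -(qproj_rep X) -(qproj_rep Y); apply qproj_eq; auto.
    * rewrite -(qproj_rep F); apply qproj_eq; auto.
Qed.

Lemma pullback T (S : sesq T) C E' : is_congruence S C ->
  prime_cong (quot_sesq S C) E' -> prime_cong S (comap (qproj C) E').
Proof.
intros HC [HE' HI]; have He := cong_equiv HC.
have HCo : is_congruence S (comap (qproj C) E').
{ destruct (map_of_cong HE') as [R [psi [[h1 [h0 [hm hs]]] hD]]].
  apply (@cong_of_map _ _ _ R (fun a => psi (qproj C a))).
  - split; [exact h1|split;[exact h0|split]].
    + intros x y; simpl; rewrite qmul_proj //; apply hm.
    + intros l b Hl; simpl; have K := hs _ _ (qsums_proj He Hl).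
      simpl in K; rewrite !big_map /= in K; rewrite big_map /=; exact K.
  - intros a b; unfold comap; apply hD. }
split; auto.
apply (proj2 (prime_iff HCo)).
destruct (proj1 (prime_iff HE') HI) as [K1 K2]; split.
- exact K1.
- intros a b f; unfold comap; rewrite !qmul_proj //; apply K2.
Qed.

Lemma lift T (S : sesq T) C E : is_congruence S C -> (forall a b, C a b -> E a b) ->
  prime_cong S E -> prime_cong (quot_sesq S C) (fun X Y => E (qrep X) (qrep Y)).
Proof.
intros HC Hsub [HE HI]; have He := cong_equiv HC.
destruct (map_of_cong HE) as [R [psi [[h1 [h0 [hm hs]]] hD]]].
have Hpr : forall x, psi (qrep (qproj C x)) = psi x.
{ intro x; apply hD, Hsub, qrep_proj, He. }
have HCo : is_congruence (quot_sesq S C) (fun X Y => E (qrep X) (qrep Y)).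
{ apply (@cong_of_map _ _ _ R (fun X => psi (qrep X))).
  - split; [|split;[|split]].
    + simpl; rewrite Hpr; exact h1.
    + simpl; rewrite Hpr; exact h0.
    + intros x y; simpl; unfold qmul; rewrite Hpr; apply hm.
    + intros l b Hl; simpl in Hl |- *.
      have := Hl R psi; rewrite big_map /=; intro K; apply K.
      split; [split;[exact h1|split;[exact h0|split;[exact hm|exact hs]]]|].
      intros a b' Hab; apply hD, Hsub, Hab.
  - intros a b; apply hD. }
split; auto.
apply (proj2 (prime_iff HCo)).
destruct (proj1 (prime_iff HE) HI) as [K1 K2]; split.
- simpl; rewrite hD !Hpr; rewrite -hD; exact K1.
- intros X Y F; simpl; unfold qmul; rewrite hD !Hpr -hD.
  intro H; destruct (K2 _ _ _ H) as [K|K]; [left; exact K|right].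
  rewrite hD Hpr -hD; exact K.
Qed.

Lemma nil_cong T (S : sesq T) : is_congruence S (NilC S).
Proof.
have H1 : forall E : spec S, exists (R : comPzRingType) (psi : T -> R),
    sesq_morph S (ring_sesq R) psi /\ forall a b, proj1_sig E a b <-> psi a = psi b.
{ intro E; apply map_of_cong; exact (proj1 (proj2_sig E)). }
pose RR E := proj1_sig (constructive_indefinite_description _ (H1 E)).
have H2 : forall E, exists psi : T -> RR E,
    sesq_morph S (ring_sesq (RR E)) psi /\ forall a b, proj1_sig E a b <-> psi a = psi b.
{ intro E; exact (proj2_sig (constructive_indefinite_description _ (H1 E))). }
pose ps E := proj1_sig (constructive_indefinite_description _ (H2 E)).
have H3 : forall E, sesq_morph S (ring_sesq (RR E)) (ps E) /\
    forall a b, proj1_sig E a b <-> ps E a = ps E b.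
{ intro E; exact (proj2_sig (constructive_indefinite_description _ (H2 E))). }
apply (@cong_of_map _ _ _ (dprod RR) (fun a : T => (fun E => ps E a) : dprod RR)).
- split; [|split;[|split]].
  + apply functional_extensionality_dep => E; exact (proj1 (proj1 (H3 E))).
  + apply functional_extensionality_dep => E; exact (proj1 (proj2 (proj1 (H3 E)))).
  + intros x y; apply functional_extensionality_dep => E; simpl.
    exact (proj1 (proj2 (proj2 (proj1 (H3 E)))) x y).
  + intros l b Hl; simpl; apply functional_extensionality_dep => E.
    rewrite dprod_sum big_map /=.
    have K := proj2 (proj2 (proj2 (proj1 (H3 E)))) l b Hl; simpl in K; rewrite big_map /= in K; exact K.
- intros a b; split.
  + intro H; apply functional_extensionality_dep => E; apply (proj2 (H3 E)); apply H, (proj2_sig E).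
  + intros H E0 HE0; apply (proj2 (H3 (exist _ E0 HE0))).
    exact (f_equal (fun f => f (exist _ E0 HE0)) H).
Qed.

Theorem lemma2p2p4 (T : Type) (S : sesq T) (HS : is_sesquiad S) :
  is_congruence S (NilC S) /\
  reduced (quot_sesq S (NilC S)) /\
  (forall C, is_congruence S C -> reduced (quot_sesq S C) ->
     forall a b, NilC S a b -> C a b) /\
  exists H : (forall E, prime_cong (quot_sesq S (NilC S)) E ->
                        prime_cong S (comap (qproj (NilC S)) E)),
    homeomorphism (spec_map H).
Proof.
have HC := nil_cong S; have He := cong_equiv HC.
split; [exact HC|split;[|split]].
- intros X Y HXY.
  destruct (classic (NilC S (qrep X) (qrep Y))) as [K|K].
  + rewrite -(qproj_rep X) -(qproj_rep Y); apply qproj_eq; auto.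
  + exfalso; apply not_all_ex_not in K; destruct K as [E K].
    apply imply_to_and in K; destruct K as [PE NE].
    apply NE; apply (HXY (fun X Y => E (qrep X) (qrep Y))).
    apply lift; auto; intros a b h; exact (h _ PE).
- intros C HCC Hred a b Hab.
  have HeC := cong_equiv HCC.
  apply (proj1 (qproj_eq HeC a b)); apply Hred.
  intros E' HE'; exact (Hab _ (pullback HCC HE')).
- exists (fun E HE => pullback HC HE).
  set f := spec_map _.
  have Hinc : forall E : spec S, forall a b, NilC S a b -> proj1_sig E a b.
  { intros E a b h; exact (h _ (proj2_sig E)). }
  pose g (E : spec S) : spec (quot_sesq S (NilC S)) :=
    exist _ (fun X Y => proj1_sig E (qrep X) (qrep Y)) (lift HC (Hinc E) (proj2_sig E)).
  have fg : forall E, f (g E) = E.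
  { intro E; apply spec_eq; simpl; unfold comap.
    have HeE := cong_equiv (proj1 (proj2_sig E)).
    destruct HeE as [Er [Es Et]].
    apply functional_extensionality => a; apply functional_extensionality => b.
    apply propositional_extensionality; split; intro H.
    - apply (Et _ (qrep (qproj (NilC S) a))); [apply Es, Hinc, qrep_proj, He|].
      apply (Et _ (qrep (qproj (NilC S) b))); [exact H|apply Hinc, qrep_proj, He].
    - apply (Et _ a); [apply Hinc, qrep_proj, He|].
      apply (Et _ b); [exact H|apply Es, Hinc, qrep_proj, He]. }
  have gf : forall E, g (f E) = E.
  { intro E; apply spec_eq; simpl; unfold comap.
    apply functional_extensionality => X; apply functional_extensionality => Y.
    rewrite !qproj_rep; reflexivity. }
  split; [exists g; [exact gf|exact fg]|split].
  + intros V HV E HVE; destruct (HV _ HVE) as [l [Hl1 Hl2]].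
    exists [seq (qproj (NilC S) p.1, qproj (NilC S) p.2) | p <- l]; split.
    * intros p Hp; apply List.in_map_iff in Hp; destruct Hp as [q [<- Hq]].
      exact (Hl1 q Hq).
    * intros E' HE'; apply Hl2; intros q Hq.
      apply (HE' (qproj (NilC S) q.1, qproj (NilC S) q.2)).
      apply List.in_map_iff; exists q; split; auto.
  + intros W HW E' [E [HWE <-]]; destruct (HW _ HWE) as [l [Hl1 Hl2]].
    exists [seq (qrep p.1, qrep p.2) | p <- l]; split.
    * intros p Hp; apply List.in_map_iff in Hp; destruct Hp as [q [<- Hq]].
      unfold Dset; simpl; unfold comap; rewrite !qproj_rep; exact (Hl1 q Hq).
    * intros E'' HE''; exists (g E''); split; [|apply fg].
      apply Hl2; intros q Hq.
      apply (HE'' (qrep q.1, qrep q.2)).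
      apply List.in_map_iff; exists q; split; auto.
Qed.
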